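(* Let $A$ be a ring, $\mathfrak a$ a regular ideal of $A$, and $A\bowtie\mathfrak a:=\{(a,a+\alpha): a\in A,\ \alpha\in\mathfrak a\}\subseteq A\times A$ the amalgamated duplication of $A$ along $\mathfrak a$. Let $n\in\{1,2,3,4,5\}$. Then $A\bowtie\mathfrak a$ satisfies condition $(P_n)$ (resp. is a locally Prüfer ring) if and only if $A$ satisfies condition $(P_n)$ (resp. is a locally Prüfer ring) and $\mathfrak a=A$.
   Context: All rings are commutative with identity. An element is regular if it is not a zerodivisor; an ideal is regular if it contains a regular element. For a ring $R$: $(P_1)$ every finitely generated ideal is projective (semi-hereditary); $(P_2)$ $R_{\mathfrak p}$ is a valuation domain for every prime (equivalently maximal) ideal $\mathfrak p$ (weak global dimension at most 1); $(P_3)$ every finitely generated ideal is locally principal (arithmetical); $(P_4)$ for an indeterminate $T$, every $g\in R[T]$ satisfies $c(gh)=c(g)c(h)$ for all $h\in R[T]$, $c(\cdot)$ the content ideal (Gauss ring); $(P_5)$ every regular finitely generated ideal is invertible (Prüfer ring). $R$ is locally Prüfer if $R_{\mathfrak m}$ is a Prüfer ring for every maximal ideal $\mathfrak m$. *)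

(* Defs.v *)
From HB Require Import structures.
From mathcomp Require Import all_boot all_algebra generic_quotient.
From mathcomp Require Import boolp.
From mathcomp Require Import ring.

Set Implicit Arguments.
Unset Strict Implicit.
Unset Printing Implicit Defensive.

Import GRing.Theory.
Local Open Scope ring_scope.
Local Open Scope quotient_scope.

Record mulset (R : comNzRingType) := MulSet {
  ms_pred :> {pred R};
  ms1 : 1 \in ms_pred;
  msM : forall x y, x \in ms_pred -> y \in ms_pred -> x * y \in ms_pred;
  ms0 : 0 \notin ms_pred }.

Section Localization.
Variables (R : comNzRingType) (S : mulset R).

Definition frac := {x : R * R | x.2 \in S}.

Definition frac_rel (x y : frac) : bool :=
  `[< exists2 u, u \in S & u * ((val x).1 * (val y).2 - (val y).1 * (val x).2) = 0 >].

Lemma frac_rel_refl : reflexive frac_rel.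
Proof. by move=> x; apply/asboolP; exists 1; [exact: ms1|rewrite subrr mulr0]. Qed.

Lemma frac_rel_sym : symmetric frac_rel.
Proof.
suff H : forall x y, frac_rel x y -> frac_rel y x.
  by move=> x y; apply/idP/idP => /H.
move=> x y /asboolP [u uS hu]; apply/asboolP; exists u => //.
by rewrite -opprB mulrN hu oppr0.
Qed.

Lemma frac_rel_trans : transitive frac_rel.
Proof.
move=> y x z /asboolP [u uS hu] /asboolP [v vS hv]; apply/asboolP.
case: x y z hu hv => [[a s] /= sS] [[b t] /= tS] [[c w] /= wS] /= hu hv.
exists (u * v * t); first by rewrite !msM.
have -> : u * v * t * (a * w - c * s) =
  v * w * (u * (a * t - b * s)) + u * s * (v * (b * w - c * t)) by ring.
by rewrite hu hv !mulr0 addr0.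
Qed.

Canonical frac_equiv := EquivRel frac_rel frac_rel_refl frac_rel_sym frac_rel_trans.

Definition loc := {eq_quot frac_equiv}.
HB.instance Definition _ := Choice.on loc.
HB.instance Definition _ := Quotient.on loc.


Definition mkfrac (a s : R) (sS : s \in S) : frac := exist _ (a, s) sS.

Definition fadd (x y : frac) : frac :=
  mkfrac ((val x).1 * (val y).2 + (val y).1 * (val x).2)
         (msM (valP x) (valP y)).
Definition fmul (x y : frac) : frac :=
  mkfrac ((val x).1 * (val y).1) (msM (valP x) (valP y)).
Definition fopp (x : frac) : frac := mkfrac (- (val x).1) (valP x).
Definition fzero : frac := mkfrac 0 (ms1 S).
Definition fone : frac := mkfrac 1 (ms1 S).

Lemma fadd_compat x x' y y' : frac_rel x x' -> frac_rel y y' ->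
  frac_rel (fadd x y) (fadd x' y').
Proof.
case: x x' y y' => [[a s] sS] [[a' s'] s'S] [[b t] tS] [[b' t'] t'S].
move=> /asboolP [u uS hu] /asboolP [v vS hv]; apply/asboolP => /=.
exists (u * v); first exact: msM.
rewrite /= in hu hv.
have -> : u * v * ((a * t + b * s) * (s' * t') - (a' * t' + b' * s') * (s * t))
  = v * t * t' * (u * (a * s' - a' * s)) + u * s * s' * (v * (b * t' - b' * t))
  by ring.
by rewrite hu hv !mulr0 addr0.
Qed.

Lemma fmul_compat x x' y y' : frac_rel x x' -> frac_rel y y' ->
  frac_rel (fmul x y) (fmul x' y').
Proof.
case: x x' y y' => [[a s] sS] [[a' s'] s'S] [[b t] tS] [[b' t'] t'S].
move=> /asboolP [u uS hu] /asboolP [v vS hv]; apply/asboolP => /=.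
exists (u * v); first exact: msM.
rewrite /= in hu hv.
have -> : u * v * (a * b * (s' * t') - a' * b' * (s * t))
  = v * b * t' * (u * (a * s' - a' * s)) + u * a' * s * (v * (b * t' - b' * t))
  by ring.
by rewrite hu hv !mulr0 addr0.
Qed.

Lemma fopp_compat x x' : frac_rel x x' -> frac_rel (fopp x) (fopp x').
Proof.
case: x x' => [[a s] sS] [[a' s'] s'S] /asboolP [u uS hu]; apply/asboolP.
exists u => //=; rewrite /= in hu.
have -> : u * (- a * s' - - a' * s) = - (u * (a * s' - a' * s)) by ring.
by rewrite hu oppr0.
Qed.

Definition lzero : loc := \pi_loc fzero.
Definition lone : loc := \pi_loc fone.
Definition ladd (x y : loc) : loc := \pi_loc (fadd (repr x) (repr y)).
Definition lmul (x y : loc) : loc := \pi_loc (fmul (repr x) (repr y)).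
Definition lopp (x : loc) : loc := \pi_loc (fopp (repr x)).

Lemma repr_rel (x : frac) : frac_rel (repr (\pi_loc x)) x.
Proof. by apply/eqmodP; rewrite reprK. Qed.

Lemma laddE x y : ladd (\pi_loc x) (\pi_loc y) = \pi_loc (fadd x y).
Proof. by apply/eqmodP/fadd_compat; apply: repr_rel. Qed.
Lemma lmulE x y : lmul (\pi_loc x) (\pi_loc y) = \pi_loc (fmul x y).
Proof. by apply/eqmodP/fmul_compat; apply: repr_rel. Qed.
Lemma loppE x : lopp (\pi_loc x) = \pi_loc (fopp x).
Proof. by apply/eqmodP/fopp_compat; apply: repr_rel. Qed.

Lemma pi_eq (x y : frac) :
  (val x).1 * (val y).2 = (val y).1 * (val x).2 -> \pi_loc x = \pi_loc y.
Proof.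
move=> h; apply/eqmodP/asboolP; exists 1; first exact: ms1.
by rewrite h subrr mulr0.
Qed.

Lemma laddA : associative ladd.
Proof.
elim/quotW=> x; elim/quotW=> y; elim/quotW=> z.
rewrite (laddE y z) (laddE x (fadd y z)) (laddE x y) (laddE (fadd x y) z).
by apply: pi_eq; case: x y z => [[a s] ?] [[b t] ?] [[c w] ?] /=; ring.
Qed.

Lemma laddC : commutative ladd.
Proof.
elim/quotW=> x; elim/quotW=> y; rewrite (laddE x y) (laddE y x).
by apply: pi_eq; case: x y => [[a s] ?] [[b t] ?] /=; ring.
Qed.

Lemma ladd0 : left_id lzero ladd.
Proof.
elim/quotW=> x; rewrite /lzero (laddE fzero x).
by apply: pi_eq; case: x => [[a s] ?] /=; ring.
Qed.

Lemma laddN : left_inverse lzero lopp ladd.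
Proof.
elim/quotW=> x; rewrite /lzero (loppE x) (laddE (fopp x) x).
by apply: pi_eq; case: x => [[a s] ?] /=; ring.
Qed.

HB.instance Definition _ := GRing.isZmodule.Build loc laddA laddC ladd0 laddN.

Lemma lmulA : associative lmul.
Proof.
elim/quotW=> x; elim/quotW=> y; elim/quotW=> z.
rewrite (lmulE y z) (lmulE x (fmul y z)) (lmulE x y) (lmulE (fmul x y) z).
by apply: pi_eq; case: x y z => [[a s] ?] [[b t] ?] [[c w] ?] /=; ring.
Qed.

Lemma lmulC : commutative lmul.
Proof.
elim/quotW=> x; elim/quotW=> y; rewrite (lmulE x y) (lmulE y x).
by apply: pi_eq; case: x y => [[a s] ?] [[b t] ?] /=; ring.
Qed.

Lemma lmul1 : left_id lone lmul.
Proof.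
elim/quotW=> x; rewrite /lone (lmulE fone x).
by apply: pi_eq; case: x => [[a s] ?] /=; ring.
Qed.

Lemma lmulDl : left_distributive lmul ladd.
Proof.
elim/quotW=> x; elim/quotW=> y; elim/quotW=> z.
rewrite (laddE x y) (lmulE (fadd x y) z) (lmulE x z) (lmulE y z).
rewrite (laddE (fmul x z) (fmul y z)).
apply/eqmodP/asboolP; exists 1; first exact: ms1.
by case: x y z => [[a s] ?] [[b t] ?] [[c w] ?] /=; ring.
Qed.

Lemma lone_neq0 : lone != lzero.
Proof.
apply/negP => /eqP /eqmodP /asboolP [u uS] /=.
rewrite mulr1 mul0r subr0 mulr1 => u0.
by move: uS; rewrite u0 (negbTE (ms0 S)).
Qed.

HB.instance Definition _ :=
  GRing.Zmodule_isComNzRing.Build loc lmulA lmulC lmul1 lmulDl lone_neq0.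

Definition locmap (r : R) : loc := \pi_loc (mkfrac r (ms1 S)).

End Localization.

Section Ideals.
Variable R : comNzRingType.

Definition is_ideal (I : R -> Prop) : Prop :=
  [/\ I 0, (forall x y, I x -> I y -> I (x + y)) & (forall r x, I x -> I (r * x))].

Definition regular (x : R) : Prop := forall y, x * y = 0 -> y = 0.

Definition regular_ideal (I : R -> Prop) : Prop := exists2 x, I x & regular x.

Definition is_prime_ideal (p : R -> Prop) : Prop :=
  [/\ is_ideal p, ~ p 1 & forall x y, p (x * y) -> p x \/ p y].

Definition is_maximal_ideal (m : R -> Prop) : Prop :=
  [/\ is_ideal m, ~ m 1 &
     forall J, is_ideal J -> (forall x, m x -> J x) -> (forall x, J x -> m x) \/ J 1].

Definition ideal_gen (s : seq R) : R -> Prop :=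
  fun z => exists f : nat -> R, z = \sum_(i < size s) f i * s`_i.

Lemma maximal_prime m : is_maximal_ideal m -> is_prime_ideal m.
Proof.
case=> [[m0 mD mM] m1 mmax]; split=> // x y mxy.
case: (pselect (m x)) => mx; [by left|right].
pose J z := exists a r, m a /\ z = a + r * x.
have JI : is_ideal J.
  split.
  - by exists 0, 0; rewrite mul0r addr0.
  - move=> _ _ [a [r [ma ->]]] [b [t [mb ->]]]; exists (a + b), (r + t).
    by split; [exact: mD|ring].
  - move=> c _ [a [r [ma ->]]]; exists (c * a), (c * r).
    by split; [exact: mM|ring].
have mJ : forall z, m z -> J z by move=> z mz; exists z, 0; rewrite mul0r addr0.
case: (mmax J JI mJ) => [Jm | [a [r [ma e]]]].
  by exfalso; apply: mx; apply: Jm; exists 0, 1; rewrite add0r mul1r.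
have -> : y = a * y + r * (x * y) by rewrite mulrA -mulrDl -e mul1r.
by apply: mD; [rewrite mulrC; exact: mM|exact: mM].
Qed.

Definition compl_pred (p : R -> Prop) : {pred R} := fun x => ~~ `[< p x >].

Lemma prime_ms1 p : is_prime_ideal p -> 1 \in compl_pred p.
Proof. by case=> _ p1 _; apply/negP => /asboolP. Qed.

Lemma prime_msM p : is_prime_ideal p ->
  forall x y, x \in compl_pred p -> y \in compl_pred p -> x * y \in compl_pred p.
Proof.
case=> _ _ pM x y /negP px /negP py; apply/negP => /asboolP /pM [] h.
- by apply: px; apply/asboolP.
- by apply: py; apply/asboolP.
Qed.

Lemma prime_ms0 p : is_prime_ideal p -> 0 \notin compl_pred p.
Proof. by case=> [[p0 _ _] _ _]; rewrite negbK; apply/asboolP. Qed.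

Definition prime_mulset p (Hp : is_prime_ideal p) : mulset R :=
  MulSet (prime_ms1 Hp) (prime_msM Hp) (prime_ms0 Hp).

Definition max_mulset m (Hm : is_maximal_ideal m) : mulset R :=
  prime_mulset (maximal_prime Hm).

Definition regular_pred : {pred R} := fun x => `[< regular x >].

Lemma regular_ms1 : 1 \in regular_pred.
Proof. by apply/asboolP => y; rewrite mul1r. Qed.

Lemma regular_msM x y : x \in regular_pred -> y \in regular_pred ->
  x * y \in regular_pred.
Proof.
move=> /asboolP rx /asboolP ry; apply/asboolP => z; rewrite -mulrA.
by move/rx/ry.
Qed.

Lemma regular_ms0 : 0 \notin regular_pred.
Proof.
by apply/negP => /asboolP /(_ 1); rewrite mul0r => /(_ erefl) /eqP; rewrite oner_eq0.
Qed.

Definition regular_mulset : mulset R := MulSet regular_ms1 regular_msM regular_ms0.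

End Ideals.

Definition total_quot (R : comNzRingType) := loc (regular_mulset R).

Record ideal (R : comNzRingType) := Ideal {
  ideal_mem :> R -> Prop;
  ideal_is_ideal : is_ideal ideal_mem }.

Section Duplication.
Variables (A : comNzRingType) (a : ideal A).

Definition dup_pred : {pred A * A} := fun x => `[< a (x.2 - x.1) >].

Lemma dup_subring_closed : GRing.subring_closed dup_pred.
Proof.
have [I0 ID IM] := ideal_is_ideal a.
split.
- by rewrite unfold_in; apply/asboolP; rewrite /= subrr.
- move=> [x1 x2] [y1 y2]; rewrite !unfold_in => /asboolP /= hx /asboolP /= hy.
  apply/asboolP => /=.
  have -> : x2 - y2 - (x1 - y1) = (x2 - x1) + (-1) * (y2 - y1) by ring.
  by apply: ID => //; exact: IM.
- move=> [x1 x2] [y1 y2]; rewrite !unfold_in => /asboolP /= hx /asboolP /= hy.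
  apply/asboolP => /=.
  have -> : x2 * y2 - x1 * y1 = x2 * (y2 - y1) + y1 * (x2 - x1) by ring.
  by apply: ID; exact: IM.
Qed.

HB.instance Definition _ := GRing.isSubringClosed.Build (A * A)%type dup_pred
  dup_subring_closed.

Record dup := Dup { dup_val : A * A; dup_valP : dup_val \in dup_pred }.

HB.instance Definition _ := [isSub for dup_val].
HB.instance Definition _ := [Choice of dup by <:].
HB.instance Definition _ := [SubChoice_isSubComNzRing of dup by <:].

End Duplication.

Section Conditions.
Variable R : comNzRingType.

Definition linear_on (N : lmodType R) (I : R -> Prop) (f : R -> N) : Prop :=
  (forall x y, I x -> I y -> f (x + y) = f x + f y) /\
  (forall r x, I x -> f (r * x) = r *: f x).

Definition projective_ideal (I : R -> Prop) : Prop :=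
  forall (M N : lmodType R) (g : {linear M -> N}),
    (forall n, exists m, g m = n) ->
    forall h : R -> N, linear_on I h ->
    exists k : R -> M, linear_on I k /\ forall x, I x -> g (k x) = h x.
End Conditions.

(* a ring D is a valuation domain: an integral domain (D is nonzero, being a
   comNzRingType) whose principal ideals are totally ordered by divisibility *)
Definition valuation_domain (D : comNzRingType) : Prop :=
  (forall x y : D, x * y = 0 -> x = 0 \/ y = 0) /\
  (forall x y : D, (exists c, y = c * x) \/ (exists c, x = c * y)).

Definition content (R : comNzRingType) (g : {poly R}) : R -> Prop :=
  ideal_gen (polyseq g).

Definition ideal_gen_mul (R : comNzRingType) (s t : seq R) : R -> Prop :=
  ideal_gen [seq x * y | x <- s, y <- t].

Section Prufer.
Variable R : comNzRingType.
Local Notation Q := (total_quot R).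
Local Notation iota := (@locmap R (regular_mulset R)).

Definition submod_mul (X Y : Q -> Prop) : Q -> Prop :=
  fun z => exists n (f g : nat -> Q),
    [/\ forall k, X (f k), forall k, Y (g k) & z = \sum_(k < n) f k * g k].

Definition fractional_ideal (J : Q -> Prop) : Prop :=
  [/\ J 0, (forall x y, J x -> J y -> J (x + y)),
      (forall r x, J x -> J (iota r * x)) &
      exists2 d, regular d & forall q, J q -> exists r, iota d * q = iota r].

(* I is invertible: I J = R for some fractional ideal J *)
Definition invertible_ideal (I : R -> Prop) : Prop :=
  exists2 J, fractional_ideal J &
    forall z, submod_mul (fun q => exists2 x, I x & q = iota x) J z <->
              exists r, z = iota r.
End Prufer.

Section Conds.
Variable R : comNzRingType.

Definition P1 : Prop := forall s : seq R, projective_ideal (ideal_gen s).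

Definition P2 : Prop :=
  forall (p : R -> Prop) (Hp : is_prime_ideal p), valuation_domain (loc (prime_mulset Hp)).

Definition P3 : Prop :=
  forall (s : seq R) (m : R -> Prop) (Hm : is_maximal_ideal m),
    exists g : loc (max_mulset Hm),
      forall z, ideal_gen (map (locmap (max_mulset Hm)) s) z <-> exists c, z = c * g.

Definition P4 : Prop :=
  forall g h : {poly R}, forall z,
    content (g * h) z <-> ideal_gen_mul (polyseq g) (polyseq h) z.

Definition P5 : Prop :=
  forall s : seq R, regular_ideal (ideal_gen s) -> invertible_ideal (ideal_gen s).

End Conds.

Definition locally_prufer (R : comNzRingType) : Prop :=
  forall (m : R -> Prop) (Hm : is_maximal_ideal m), P5 (loc (max_mulset Hm)).

Definition Pcond (n : nat) (R : comNzRingType) : Prop :=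
  match n with
  | 1 => P1 R | 2 => P2 R | 3 => P3 R | 4 => P4 R | 5 => P5 R
  | _ => True
  end.

(* Main.v *)
From HB Require Import structures.
From mathcomp Require Import all_boot all_algebra generic_quotient boolp ring.
From mathcomp Require classical_sets.
Require Import Defs.
Set Implicit Arguments. Unset Strict Implicit. Unset Printing Implicit Defensive.
Import GRing.Theory.
Local Open Scope ring_scope.
Local Open Scope quotient_scope.


Section IdealFacts.
Variable R : comNzRingType.

Lemma ideal_sum (J : R -> Prop) n (F : nat -> R) : is_ideal J ->
  (forall i, (i < n)%N -> J (F i)) -> J (\sum_(i < n) F i).
Proof.
case=> J0 JD JM HF; apply: (big_ind J) => //.
by move=> i _; apply: HF.
Qed.

Lemma ideal_gen_ideal (s : seq R) : is_ideal (ideal_gen s).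
Proof.
split.
- by exists (fun _ => 0); rewrite big1 // => i _; rewrite mul0r.
- move=> _ _ [f ->] [g ->]; exists (fun i => f i + g i).
  by rewrite -big_split /=; apply: eq_bigr => i _; rewrite mulrDl.
- move=> r _ [f ->]; exists (fun i => r * f i).
  by rewrite mulr_sumr; apply: eq_bigr => i _; rewrite mulrA.
Qed.

Lemma ideal_gen_nth (s : seq R) i : (i < size s)%N -> ideal_gen s s`_i.
Proof.
move=> hi; exists (fun j => if j == i then 1 else 0).
rewrite (bigD1 (Ordinal hi)) //= eqxx mul1r big1 ?addr0 //.
by move=> j; rewrite -val_eqE /= => /negbTE ->; rewrite mul0r.
Qed.

Lemma ideal_gen_min (s : seq R) (J : R -> Prop) : is_ideal J ->
  (forall i, (i < size s)%N -> J s`_i) -> forall z, ideal_gen s z -> J z.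
Proof.
move=> HJ Hs _ [f ->]; apply: (ideal_sum (F := fun i => f i * s`_i)) => // i hi.
by case: HJ => _ _ JM; apply: JM; apply: Hs.
Qed.

Lemma ideal_gen2 (x y z : R) :
  ideal_gen [:: x; y] z <-> exists u v, z = u * x + v * y.
Proof.
split.
- by case=> f ->; exists (f 0%N), (f 1%N); rewrite !big_ord_recl big_ord0 addr0.
- case=> u [v ->]; exists (fun i => if i == 0%N then u else v).
  by rewrite !big_ord_recl big_ord0 addr0.
Qed.

Lemma ideal_opp (J : R -> Prop) x : is_ideal J -> J x -> J (- x).
Proof. by case=> _ _ JM Jx; rewrite -mulN1r; apply: JM. Qed.

Lemma ideal_sub (J : R -> Prop) x y : is_ideal J -> J x -> J y -> J (x - y).
Proof. move=> HJ Jx Jy; case: (HJ) => _ JD _; apply: JD => //; exact: ideal_opp. Qed.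

Lemma ideal_mulr (J : R -> Prop) x r : is_ideal J -> J x -> J (x * r).
Proof. by case=> _ _ JM Jx; rewrite mulrC; apply: JM. Qed.

Lemma ideal_all (J : R -> Prop) : is_ideal J -> J 1 -> forall x, J x.
Proof. by case=> _ _ JM J1 x; rewrite -(mulr1 x); apply: JM. Qed.

End IdealFacts.

Lemma ideal_gen_map (R S : comNzRingType) (f : {rmorphism R -> S}) (s : seq R) z :
  ideal_gen s z -> ideal_gen (map f s) (f z).
Proof.
case=> c ->; exists (fun i => f (c i)); rewrite rmorph_sum size_map.
by apply: eq_bigr => i _; rewrite rmorphM (nth_map 0).
Qed.

Section LocBasics.
Variables (R : comNzRingType) (S : mulset R).
Local Notation L := (loc S).

Lemma piD (x y : frac S) : \pi_L x + \pi_L y = \pi_L (fadd x y).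
Proof. exact: laddE. Qed.
Lemma piM (x y : frac S) : \pi_L x * \pi_L y = \pi_L (fmul x y).
Proof. exact: lmulE. Qed.
Lemma piN (x : frac S) : - \pi_L x = \pi_L (fopp x).
Proof. exact: loppE. Qed.
Lemma pi1 : 1 = \pi_L (fone S).
Proof. by []. Qed.
Lemma pi0 : 0 = \pi_L (fzero S).
Proof. by []. Qed.

Lemma pi_eqP (x y : frac S) : \pi_L x = \pi_L y <->
  exists2 u, u \in S & u * ((val x).1 * (val y).2 - (val y).1 * (val x).2) = 0.
Proof.
split; first by move/eqmodP => /asboolP.
by move=> h; apply/eqmodP/asboolP.
Qed.

Lemma pi_eq0P (x : frac S) : \pi_L x = 0 <-> exists2 u, u \in S & u * (val x).1 = 0.
Proof.
rewrite pi0 pi_eqP /=; split; case=> u uS hu; exists u => //.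
  by move: hu; rewrite mulr1 mul0r subr0.
by rewrite mulr1 mul0r subr0.
Qed.

Lemma locmap_zmod : zmod_morphism (locmap S).
Proof.
move=> x y; rewrite /locmap piN piD; apply: pi_eq => /=; ring.
Qed.
Lemma locmap_mon : monoid_morphism (locmap S).
Proof.
split; first by [].
by move=> x y; rewrite /locmap piM; apply: pi_eq => /=; ring.
Qed.
HB.instance Definition _ := GRing.isZmodMorphism.Build _ _ (locmap S) locmap_zmod.
HB.instance Definition _ := GRing.isMonoidMorphism.Build _ _ (locmap S) locmap_mon.

Lemma loc_elim (q : L) : exists x : frac S, q = \pi_L x.
Proof. by elim/quotW: q => x; exists x. Qed.

Lemma pi_mkfracE (r s : R) (sS : s \in S) :
  \pi_L (mkfrac r sS) * locmap S s = locmap S r.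
Proof. by rewrite /locmap piM; apply: pi_eq => /=; ring. Qed.

End LocBasics.

Section LocFun.
Variables (R S : comNzRingType) (SR : mulset R) (SS : mulset S).
Variables (f : {rmorphism R -> S}).
Hypothesis Hf : forall s, s \in SR -> f s \in SS.

Definition fracF (x : frac SR) : frac SS :=
  @mkfrac _ SS (f (val x).1) (f (val x).2) (Hf (valP x)).

Lemma fracF_rel x y : frac_rel x y -> frac_rel (fracF x) (fracF y).
Proof.
move=> /asboolP [u uS hu]; apply/asboolP; exists (f u); first exact: Hf.
by rewrite /= -!rmorphM -rmorphB -rmorphM hu rmorph0.
Qed.

Definition locF (q : loc SR) : loc SS := \pi_(loc SS) (fracF (repr q)).

Lemma locF_pi x : locF (\pi_(loc SR) x) = \pi_(loc SS) (fracF x).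
Proof. by rewrite /locF; apply/eqmodP; apply: fracF_rel; apply: repr_rel. Qed.

Lemma locF_zmod : zmod_morphism locF.
Proof.
move=> p q; case: (loc_elim p) => x ->; case: (loc_elim q) => y ->.
rewrite piN piD !locF_pi piN piD; apply: pi_eq => /=.
by rewrite !(rmorphD, rmorphM, rmorphN).
Qed.
Lemma locF_mon : monoid_morphism locF.
Proof.
split.
  by rewrite pi1 locF_pi; apply: pi_eq => /=; rewrite rmorph1.
move=> p q; case: (loc_elim p) => x ->; case: (loc_elim q) => y ->.
rewrite piM !locF_pi piM; apply: pi_eq => /=.
by rewrite !rmorphM.
Qed.
HB.instance Definition _ := GRing.isZmodMorphism.Build _ _ locF locF_zmod.
HB.instance Definition _ := GRing.isMonoidMorphism.Build _ _ locF locF_mon.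

Lemma locF_locmap r : locF (locmap SR r) = locmap SS (f r).
Proof. by rewrite /locmap locF_pi; apply: pi_eq => /=; rewrite rmorph1. Qed.

End LocFun.


Section LemmaG.
Variable R : comNzRingType.
Local Notation Q := (total_quot R).
Local Notation iota := (locmap (regular_mulset R)).

Lemma regular_in (w : R) : regular w -> w \in regular_mulset R.
Proof. by move=> h; apply/asboolP. Qed.

Lemma in_regular (w : R) : w \in regular_mulset R -> regular w.
Proof. by move/asboolP. Qed.

Lemma P5_split (x y : R) : P5 R -> x * y = 0 -> regular (x + y) ->
  exists d, d * (x + y) = x.
Proof.
move=> HP hxy hw.
have hI : regular_ideal (ideal_gen [:: x; y]).
  by exists (x + y) => //; apply/ideal_gen2; exists 1, 1; rewrite !mul1r.
have [J _ HIJ] := HP _ hI.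
have wS := regular_in hw.
pose e : Q := \pi_Q (mkfrac x wS).
have key : forall t, ideal_gen [:: x; y] t ->
    exists2 t', ideal_gen [:: x; y] t' & e * iota t = iota t'.
  move=> t /ideal_gen2 [u [v ->]]; exists (u * x).
    by apply/ideal_gen2; exists u, 0; rewrite mul0r addr0.
  rewrite /e /locmap piM; apply: pi_eq => /=.
  have -> : x * (u * x + v * y) * 1 = u * x * x + v * (x * y) by ring.
  rewrite hxy mulr0 addr0.
  have -> : u * x * ((x + y) * 1) = u*x*x + u*(x*y) by ring.
  by rewrite hxy mulr0 addr0.
have [n [f [g [Hf Hg H1]]]] : submod_mul
    (fun q => exists2 t, ideal_gen [:: x; y] t & q = iota t) J 1.
  by apply/HIJ; exists 1; rewrite rmorph1.
have : submod_mul (fun q => exists2 t, ideal_gen [:: x; y] t & q = iota t) J e.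
  rewrite /submod_mul; exists n, (fun k => e * f k), g; split => //.
  - move=> k; have [t It ->] := Hf k; have [t' It' ->] := key t It.
    by exists t'.
  - transitivity (e * 1); first by rewrite mulr1.
    by rewrite H1 mulr_sumr; apply: eq_bigr => k _; rewrite mulrA.
move/HIJ => [d]; rewrite /e /locmap => /pi_eqP /= [u /in_regular uS].
move=> /uS /eqP; rewrite subr_eq0 !mulr1 => /eqP hx.
by exists d; apply/esym.
Qed.
End LemmaG.

Lemma exists_max_ideal (A : comNzRingType) (a : A -> Prop) :
  is_ideal a -> ~ a 1 -> exists M, is_maximal_ideal M /\ forall x, a x -> M x.
Proof.
move=> Ha na1.
pose P (X : A -> Prop) := [/\ ~ X 1, (forall x y, X x -> X y -> X (x + y)),
   (forall r x, X x -> X (r * x)) & ((forall x, a x -> X x) \/ (forall x, ~ X x))].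
have [M [[M1 MD MM Ma] Mmax]] : exists M, P M /\
    (forall B, classical_sets.proper M B -> ~ P B).
  apply: classical_sets.Zorn_bigcup => F FP Ftot.
  split.
  - by case=> X FX X1; case: (FP X FX) => /(_ X1).
  - move=> x y [X FX Xx] [Y FY Yy].
    case: (Ftot X Y FX FY) => [XY|YX].
      by exists Y => //; case: (FP Y FY) => _ YD _ _; apply: YD => //; apply: XY.
    by exists X => //; case: (FP X FX) => _ XD _ _; apply: XD => //; apply: YX.
  - move=> r x [X FX Xx]; exists X => //.
    by case: (FP X FX) => _ _ XM _; apply: XM.
  - case: (pselect (exists2 X, F X & forall x, a x -> X x)) => [[X FX Xa]|nX].
      by left => x ax; exists X => //; apply: Xa.
    right => x [X FX Xx]; case: (FP X FX) => _ _ _ [Xa|/(_ x)//].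
    by apply: nX; exists X.
have aM : forall x, a x -> M x.
  case: Ma => // M0.
  exfalso; apply: (Mmax a); last first.
    by case: Ha => a0 aD aM; split => //; left.
  split; first by move=> t /M0.
  by move/(_ 0); case: Ha => a0 _ _ /(_ a0) /M0.
have M0 : M 0 by apply: aM; case: Ha.
exists M; split => //; split => //.
move=> J [J0 JD JM] MJ.
case: (pselect (J 1)) => [J1|nJ1]; [by right|left].
move=> x Jx; apply: contrapT => nMx.
apply: (Mmax J); last by split => //; left => y /aM /MJ.
by split => // /(_ x Jx).
Qed.


Section IdealMod.
Variables (R : comNzRingType) (I : ideal R).
Let HI : is_ideal I := ideal_is_ideal I.

Definition ipred : {pred R^o} := fun x => `[< I x >].

Lemma ipred_closed : subsemimod_closed ipred.
Proof.
case: HI => I0 ID IM; split; first split.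
- by rewrite unfold_in; apply/asboolP.
- by move=> u v; rewrite !unfold_in => /asboolP Iu /asboolP Iv; apply/asboolP; apply: ID.
- by move=> r u; rewrite !unfold_in => /asboolP Iu; apply/asboolP; apply: IM.
Qed.

Record isub := ISub { isval : R^o; isvalP : isval \in ipred }.
HB.instance Definition _ := [isSub for isval].
HB.instance Definition _ := [Choice of isub by <:].
HB.instance Definition _ := GRing.SubChoice_isSubLmodule.Build R R^o ipred isub ipred_closed.

Lemma ipredP x : I x -> x \in ipred.
Proof. by move=> h; rewrite unfold_in; apply/asboolP. Qed.

Lemma isvalI (n : isub) : I (isval n).
Proof. by have := isvalP n; rewrite unfold_in => /asboolP. Qed.

End IdealMod.

Section DualBasis.
Variables (R : comNzRingType) (x y : R).
Definition Ixy : ideal R := Ideal (ideal_gen_ideal [:: x; y]).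
Local Notation I := (ideal_gen [:: x; y]).

Lemma gfun_in (m : (R^o * R^o)%type) : (m.1 * x + m.2 * y) \in ipred Ixy.
Proof. by apply: ipredP; apply/ideal_gen2; exists m.1, m.2. Qed.

Definition gfun (m : (R^o * R^o)%type) : isub Ixy :=
  ISub (gfun_in m).

Lemma gfun_lin : linear gfun.
Proof.
move=> r m1 m2; apply: val_inj => /=.
change ((r * m1.1 + m2.1) * x + (r * m1.2 + m2.2) * y =
  r * (m1.1 * x + m1.2 * y) + (m2.1 * x + m2.2 * y)); ring.
Qed.
HB.instance Definition _ := GRing.isLinear.Build R (R^o * R^o)%type (isub Ixy) _ gfun gfun_lin.

Definition hfun (z : R) : isub Ixy :=
  match pselect (I z) with
  | left Iz => ISub (@ipredP _ Ixy z Iz)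
  | right _ => 0
  end.

Lemma hfunE z (Iz : I z) : hfun z = ISub (@ipredP _ Ixy z Iz).
Proof.
rewrite /hfun; case: pselect => [Iz'|//]; apply: val_inj => //.
Qed.

Lemma P1_dual : P1 R -> exists phi psi : R -> R,
  [/\ @linear_on R R^o I phi, @linear_on R R^o I psi &
      forall z, I z -> z = phi z * x + psi z * y].
Proof.
move=> HP.
have gsurj : forall n : isub Ixy, exists m, gfun m = n.
  move=> n; have /ideal_gen2 [u [v e]] := isvalI n.
  by exists (u : R^o, v : R^o); apply: val_inj => /=; rewrite e.
have hlin : @linear_on R (isub Ixy) I hfun.
  split.
  - move=> z w Iz Iw.
    have Izw : I (z + w) by case: (ideal_gen_ideal [:: x; y]) => _ D _; apply: D.
    by rewrite !hfunE; apply: val_inj.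
  - move=> r z Iz.
    have Irz : I (r * z) by case: (ideal_gen_ideal [:: x; y]) => _ _ M; apply: M.
    by rewrite !hfunE; apply: val_inj.
have [k [[kD kZ] gk]] := HP [:: x; y] _ _ gfun gsurj hfun hlin.
exists (fun z => (k z).1), (fun z => (k z).2); split.
- by split=> [z w Iz Iw|r z Iz]; rewrite ?kD ?kZ.
- by split=> [z w Iz Iw|r z Iz]; rewrite ?kD ?kZ.
- move=> z Iz; have := gk z Iz; rewrite hfunE => /(congr1 val) /= e.
  exact/esym.
Qed.

End DualBasis.


Lemma in_prime_mulset (R : comNzRingType) (p : R -> Prop) (Hp : is_prime_ideal p) s :
  s \in prime_mulset Hp <-> ~ p s.
Proof.
rewrite /= /compl_pred unfold_in; split.
  by move/negP => h ps; apply: h; apply/asboolP.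
by move=> h; apply/negP => /asboolP.
Qed.

Lemma prime_res (R : comNzRingType) (p : R -> Prop) : is_prime_ideal p ->
  forall x y, p (x * y) -> ~ p x -> p y.
Proof. by case=> _ _ pM x y /pM [] // ? /(_ _). Qed.

Lemma regK (R : comNzRingType) (r : R) : regular r -> forall x, x * r = 0 -> x = 0.
Proof. by move=> hr x; rewrite mulrC; apply: hr. Qed.

Lemma regM (R : comNzRingType) (r t : R) : regular r -> regular t -> regular (r * t).
Proof. by move=> hr ht x; rewrite -mulrA => /hr /ht. Qed.

Lemma reg_neq0 (R : comNzRingType) (r : R) : regular r -> r <> 0.
Proof.
move=> hr r0; have := hr 1; rewrite r0 mul0r => /(_ erefl) /eqP.
by rewrite oner_eq0.
Qed.

Lemma coef_size (R : nzRingType) (p : {poly R}) i : p`_i != 0 -> (i < size p)%N.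
Proof. by rewrite ltnNge; apply: contra => /(nth_default 0) ->. Qed.

Section Dup.
Variables (A : comNzRingType) (a : ideal A).
Local Notation D := (dup a).
Let Ha : is_ideal a := ideal_is_ideal a.

Definition p1 (z : D) : A := (val z).1.
Definition p2 (z : D) : A := (val z).2.
Lemma p1_zmod : zmod_morphism p1. Proof. by move=> x y; rewrite /p1 rmorphB. Qed.
Lemma p1_mon : monoid_morphism p1.
Proof. by split; [rewrite /p1 rmorph1|move=> x y; rewrite /p1 rmorphM]. Qed.
HB.instance Definition _ := GRing.isZmodMorphism.Build _ _ p1 p1_zmod.
HB.instance Definition _ := GRing.isMonoidMorphism.Build _ _ p1 p1_mon.
Lemma p2_zmod : zmod_morphism p2. Proof. by move=> x y; rewrite /p2 rmorphB. Qed.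
Lemma p2_mon : monoid_morphism p2.
Proof. by split; [rewrite /p2 rmorph1|move=> x y; rewrite /p2 rmorphM]. Qed.
HB.instance Definition _ := GRing.isZmodMorphism.Build _ _ p2 p2_zmod.
HB.instance Definition _ := GRing.isMonoidMorphism.Build _ _ p2 p2_mon.

Lemma dupP (x y : A) : a (y - x) -> (x, y) \in dup_pred a.
Proof. by move=> h; rewrite unfold_in; apply/asboolP. Qed.
Definition mkD (x y : A) (h : a (y - x)) : D := Dup (dupP h).
Lemma p1_mkD x y h : p1 (@mkD x y h) = x. Proof. by []. Qed.
Lemma p2_mkD x y h : p2 (@mkD x y h) = y. Proof. by []. Qed.

Lemma D_eq (z w : D) : p1 z = p1 w -> p2 z = p2 w -> z = w.
Proof.
move=> h1 h2; apply: val_inj.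
by rewrite [val z]surjective_pairing [val w]surjective_pairing -/(p1 z) -/(p2 z) h1 h2.
Qed.

Lemma dup_in (z : D) : a (p2 z - p1 z).
Proof. by have := dup_valP z; rewrite unfold_in => /asboolP. Qed.

Lemma a_xx (x : A) : a (x - x).
Proof. by rewrite subrr; case: Ha. Qed.

Definition diag (x : A) : D := mkD (a_xx x).
Lemma p1_diag x : p1 (diag x) = x. Proof. by []. Qed.
Lemma p2_diag x : p2 (diag x) = x. Proof. by []. Qed.
Lemma diag_zmod : zmod_morphism diag.
Proof. by move=> x y; apply: D_eq; rewrite !rmorphB. Qed.
Lemma diag_mon : monoid_morphism diag.
Proof.
split; first by apply: D_eq; rewrite rmorph1.
by move=> x y; apply: D_eq; rewrite rmorphM.
Qed.
HB.instance Definition _ := GRing.isZmodMorphism.Build _ _ diag diag_zmod.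
HB.instance Definition _ := GRing.isMonoidMorphism.Build _ _ diag diag_mon.

Lemma regular_diag r : regular r -> regular (diag r).
Proof.
move=> hr z hz; apply: D_eq; rewrite rmorph0.
  by have := congr1 p1 hz; rewrite rmorphM rmorph0 /= p1_diag => /hr.
by have := congr1 p2 hz; rewrite rmorphM rmorph0 /= p2_diag => /hr.
Qed.

Lemma full_of t : regular t -> (exists d : D, p1 d * t = t /\ p2 d * t = 0) ->
  forall x, a x.
Proof.
move=> ht [d [h1 h2]].
have e1 : p1 d = 1.
  by apply/eqP; rewrite -subr_eq0; apply/eqP/(regK ht); rewrite mulrBl h1 mul1r subrr.
have e2 : p2 d = 0 by apply: (regK ht).
apply: (ideal_all Ha); rewrite -[1]opprK; apply: ideal_opp => //.
by have := dup_in d; rewrite e1 e2 sub0r.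
Qed.

Section Elems.
Variables (r : A) (ar : a r) (hr : regular r).

Lemma aX : a (0 - r). Proof. by rewrite sub0r; apply: ideal_opp. Qed.
Lemma aY : a (r - 0). Proof. by rewrite subr0. Qed.
Definition X : D := mkD aX.
Definition Y : D := mkD aY.
Lemma XY0 : X * Y = 0.
Proof. by apply: D_eq; rewrite rmorphM rmorph0 /= ?mulr0 ?mul0r. Qed.
Lemma XYd : X + Y = diag r.
Proof. by apply: D_eq; rewrite rmorphD /= ?addr0 ?add0r. Qed.

Lemma p1X : p1 X = r. Proof. by []. Qed.
Lemma p2X : p2 X = 0. Proof. by []. Qed.
Lemma p1Y : p1 Y = 0. Proof. by []. Qed.
Lemma p2Y : p2 Y = r. Proof. by []. Qed.

Lemma full_P5 : P5 D -> forall x, a x.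
Proof.
move=> HP; have hreg : regular (X + Y) by rewrite XYd; apply: regular_diag.
have [d hd] := P5_split HP XY0 hreg.
apply: (full_of hr); exists d; rewrite XYd in hd; split.
- by have := congr1 p1 hd; rewrite rmorphM /= p1_diag.
- by have := congr1 p2 hd; rewrite rmorphM /= p2_diag.
Qed.

Lemma full_P1 : P1 D -> forall x, a x.
Proof.
move=> HP; have [phi [psi [[_ phiZ] _ hz]]] := P1_dual X Y HP.
have IX : ideal_gen [:: X; Y] X.
  by apply/ideal_gen2; exists 1, 0; rewrite mul1r mul0r addr0.
have e0 : phi 0 = 0.
  have := phiZ 0 X IX; rewrite mul0r => ->; exact: mul0r.
have eY : Y * phi X = 0.
  have e := phiZ Y X IX; rewrite mulrC XY0 e0 in e; exact: (esym e).
apply: (full_of hr); exists (phi X); split.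
- have := congr1 p1 (hz X IX); rewrite !(rmorphD, rmorphM) /= p1X p1Y mulr0 addr0.
  by move=> e; apply/esym.
- have := congr1 p2 eY; rewrite rmorphM rmorph0 /= p2Y.
  by rewrite mulrC.
Qed.

Lemma Y_neq0 : Y != 0.
Proof. by apply/eqP => /(congr1 p2); rewrite rmorph0 /= p2Y; exact: reg_neq0. Qed.
Lemma X_neq0 : X != 0.
Proof. by apply/eqP => /(congr1 p1); rewrite rmorph0 /= p1X; exact: reg_neq0. Qed.

Lemma full_P4 : P4 D -> forall x, a x.
Proof.
move=> HP.
pose G : {poly D} := X%:P + Y%:P * 'X.
pose H : {poly D} := Y%:P + X%:P * 'X.
have G0 : G`_0 = X by rewrite coefD coefC coefMX /= addr0.
have G1 : G`_1 = Y by rewrite coefD coefC coefMX /= add0r coefC.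
have H1 : H`_1 = X by rewrite coefD coefC coefMX /= add0r coefC.
have sG : (1 < size G)%N by apply: coef_size; rewrite G1 Y_neq0.
have sH : (1 < size H)%N by apply: coef_size; rewrite H1 X_neq0.
have XG : X \in (G : seq D) by rewrite -G0; apply: mem_nth; exact: ltnW.
have XH : X \in (H : seq D) by rewrite -H1; apply: mem_nth.
have hXX : ideal_gen_mul G H (X * X).
  have hin : X * X \in [seq x * y | x <- (G : seq D), y <- (H : seq D)].
    by apply: allpairs_f.
  rewrite /ideal_gen_mul -(nth_index 0 hin); apply: ideal_gen_nth.
  by rewrite index_mem.
have := (HP G H (X * X)).2 hXX.
have GH : G * H = (X * X + Y * Y)%:P * 'X.
  have hc : X%:P * Y%:P = 0 :> {poly D} by rewrite -polyCM XY0.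
  rewrite /G /H polyCD !polyCM.
  transitivity (X%:P * Y%:P * (1 + 'X^2) + (X%:P * X%:P + Y%:P * Y%:P) * 'X).
    by rewrite expr2; ring.
  by rewrite hc mul0r add0r.
rewrite /content GH => -[f hf].
apply: (full_of (regM hr hr)).
set W := X * X + Y * Y.
set c := \sum_(i < size (W%:P * 'X)) f i * (if nat_of_ord i == 1%N then 1 else 0).
have e : X * X = c * W.
  rewrite hf /c mulr_suml; apply: eq_bigr => i _.
  rewrite coefMX coefC; case: i => [[|[|i]] hi] //=; rewrite ?mulr0 ?mul0r ?mulr1 //.
exists c; split.
- have := congr1 p1 e; rewrite /W !(rmorphM, rmorphD) /= p1X p1Y mul0r addr0.
  by move=> e1; apply/esym.
- have := congr1 p2 e; rewrite /W !(rmorphM, rmorphD) /= p2X p2Y mul0r add0r.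
  by move=> e1; apply/esym.
Qed.

End Elems.
End Dup.


Section LocFix.
Variables (R : comNzRingType) (S : mulset R).
Local Notation L := (loc S).

Lemma fixE (z : R) (x : frac S) : locmap S z = \pi_L x * locmap S z ->
  exists2 u, u \in S & u * (z * ((val x).2 - (val x).1)) = 0.
Proof.
rewrite /locmap piM => /pi_eqP /= [u uS hu]; exists u => //.
by rewrite -hu; congr (_ * _); ring.
Qed.

Lemma fix2E (z : R) (x y : frac S) :
  locmap S z = (\pi_L x + \pi_L y) * locmap S z ->
  exists2 u, u \in S & u * (z * ((val x).2 * (val y).2 -
     ((val x).1 * (val y).2 + (val y).1 * (val x).2))) = 0.
Proof.
rewrite /locmap piD piM => /pi_eqP /= [u uS hu]; exists u => //.
by rewrite -hu; congr (_ * _); ring.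
Qed.
End LocFix.

Section Hat.
Variables (A : comNzRingType) (a : ideal A).
Local Notation D := (dup a).
Local Notation p1 := (@p1 _ a).
Local Notation p2 := (@p2 _ a).
Variable M : A -> Prop.
Definition hat : D -> Prop := fun z => M (p1 z).

Lemma hat_ideal : is_ideal M -> is_ideal hat.
Proof.
case=> M0 MD MM; split; rewrite /hat.
- by rewrite rmorph0.
- by move=> x y hx hy; rewrite rmorphD; exact: MD.
- by move=> r x hx; rewrite rmorphM; exact: MM.
Qed.

Lemma hat_prime : is_prime_ideal M -> is_prime_ideal hat.
Proof.
case=> HM M1 Mp; split.
- exact: hat_ideal.
- by rewrite /hat rmorph1.
- by move=> x y; rewrite /hat rmorphM; exact: Mp.
Qed.

Lemma hat_max : is_maximal_ideal M -> is_maximal_ideal hat.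
Proof.
case=> HM M1 Mmax; split.
- exact: hat_ideal.
- by rewrite /hat rmorph1.
move=> J HJ hJ; case: (HJ) => J0 JD JM.
pose J' := fun t => exists2 z, J z & p1 z = t.
have HJ' : is_ideal J'.
  split.
  - by exists 0 => //; rewrite rmorph0.
  - move=> _ _ [z Jz <-] [w Jw <-]; exists (z + w); first exact: JD.
    by rewrite rmorphD.
  - move=> r _ [z Jz <-]; exists (diag a r * z); first exact: JM.
    by rewrite rmorphM /= p1_diag.
have MJ' : forall x, M x -> J' x.
  by move=> x Mx; exists (diag a x); [apply: hJ; rewrite /hat /= p1_diag|rewrite /= p1_diag].
case: (Mmax J' HJ' MJ') => [J'M|[z Jz z1]]; [left|right].
- by move=> z Jz; apply: J'M; exists z.
- have -> : 1 = z + (1 - z) by rewrite addrC subrK.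
  apply: JD => //; apply: hJ; rewrite /hat rmorphB rmorph1 /= z1 subrr.
  by case: HM.
Qed.
End Hat.

Section Contra.
Variables (A : comNzRingType) (a : ideal A).
Local Notation D := (dup a).
Local Notation p1 := (@p1 _ a).
Local Notation p2 := (@p2 _ a).
Let Ha : is_ideal a := ideal_is_ideal a.
Variables (r : A) (ar : a r) (hr : regular r).
Variables (M : A -> Prop) (HM : is_maximal_ideal M) (aM : forall x, a x -> M x).
Let Hm : is_maximal_ideal (@hat _ a M) := @hat_max _ a M HM.
Local Notation S := (max_mulset Hm).
Let HMp : is_prime_ideal M := maximal_prime HM.
Let HMi : is_ideal M := let: And3 h _ _ := HM in h.

Lemma inS (s : D) : s \in S -> ~ M (p1 s).
Proof. by move/in_prime_mulset. Qed.

Lemma Mp21 (z : D) : M (p2 z) -> M (p1 z).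
Proof.
move=> h; have -> : p1 z = p2 z - (p2 z - p1 z) by ring.
by apply: ideal_sub => //; apply: aM; apply: dup_in.
Qed.

Lemma Mp12 (z : D) : M (p1 z) -> M (p2 z).
Proof.
move=> h; have -> : p2 z = p1 z + (p2 z - p1 z) by ring.
by case: HMi => _ MD _; apply: MD => //; apply: aM; apply: dup_in.
Qed.

Lemma inS2 (s : D) : s \in S -> ~ M (p2 s).
Proof. by move=> /inS h /Mp21. Qed.

Lemma resr (w t v : A) : ~ M w -> regular t -> w * (t * v) = 0 -> M v.
Proof.
move=> nw ht e; apply: (prime_res HMp _ nw).
have -> : w * v = 0 by apply: (regK ht); rewrite -e; ring.
by case: HMi.
Qed.

Local Notation X := (X ar).
Local Notation Y := (Y ar).

Lemma nP2 : P2 D -> False.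
Proof.
move=> HP; have [dom _] := HP _ (maximal_prime Hm).
have : locmap S X * locmap S Y = 0 by rewrite -rmorphM XY0 rmorph0.
case/dom; rewrite /locmap => /pi_eq0P [u /= uS hu].
- apply: (inS uS); apply: (@resr 1 r) => //; first by case: HM.
  by have := congr1 p1 hu; rewrite rmorphM rmorph0 /= p1X mul1r mulrC.
- apply: (inS2 uS); apply: (@resr 1 r) => //; first by case: HM.
  by have := congr1 p2 hu; rewrite rmorphM rmorph0 /= p2Y mul1r mulrC.
Qed.

Lemma nP3 : P3 D -> False.
Proof.
move=> HP; have [g hg] := HP [:: X; Y] _ Hm.
set X' := locmap S X; set Y' := locmap S Y.
have XY' : X' * Y' = 0 by rewrite -rmorphM XY0 rmorph0.
have [c1 hc1] : exists c, X' = c * g.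
  by apply/hg; apply/ideal_gen2; exists 1, 0; rewrite mul1r mul0r addr0.
have [c2 hc2] : exists c, Y' = c * g.
  by apply/hg; apply/ideal_gen2; exists 0, 1; rewrite mul1r mul0r add0r.
have [f0 [f1 hgf]] : exists f0 f1, g = f0 * X' + f1 * Y'.
  by apply/ideal_gen2; apply/hg; exists 1; rewrite mul1r.
have e1 : locmap S (X * X) = (c1 * f0) * locmap S (X * X).
  rewrite rmorphM -/X'.
  have : X' * X' = c1 * f0 * (X' * X') + c1 * f1 * (X' * Y').
    by rewrite {1}hc1 hgf; ring.
  by rewrite XY' mulr0 addr0.
have e2 : locmap S (Y * Y) = (c2 * f1) * locmap S (Y * Y).
  rewrite rmorphM -/Y'.
  have : Y' * Y' = c2 * f1 * (Y' * Y') + c2 * f0 * (X' * Y').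
    by rewrite {1}hc2 hgf; ring.
  by rewrite XY' mulr0 addr0.
have eg : g = (c1 * f0 + c2 * f1) * g.
  by rewrite {1}hgf {1}hc1 {1}hc2; ring.
have e3 : X' = (c1 * f0 + c2 * f1) * X'.
  by rewrite {1}hc1 {1}eg hc1; ring.
have [x ex] := loc_elim (c1 * f0); have [y ey] := loc_elim (c2 * f1).
rewrite ex in e1; rewrite ey in e2; rewrite ex ey in e3.
have [u1 u1S hu1] := fixE e1.
have [u2 u2S hu2] := fix2E e3.
have [u3 u3S hu3] := fixE e2.
have sS := valP x; have tS := valP y.
set s := (val x).2 in hu1 hu2 sS; set p := (val x).1 in hu1 hu2.
set t := (val y).2 in hu2 hu3 tS; set q := (val y).1 in hu2 hu3.
have h1 : M (p1 s - p1 p).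
  apply: (@resr (p1 u1) (r * r)); [exact: inS|exact: regM|].
  by have := congr1 p1 hu1; rewrite !(rmorphM, rmorphB, rmorph0) /= p1X.
have h2 : M (p2 t - p2 q).
  apply: (@resr (p2 u3) (r * r)); [exact: inS2|exact: regM|].
  by have := congr1 p2 hu3; rewrite !(rmorphM, rmorphB, rmorph0) /= p2Y.
have h3 : M (p1 s * p1 t - (p1 p * p1 t + p1 q * p1 s)).
  apply: (@resr (p1 u2) r) ; [exact: inS|exact: hr|].
  by have := congr1 p1 hu2; rewrite !(rmorphM, rmorphB, rmorphD, rmorph0) /= p1X.
have h4 : M (p1 s * p1 q).
  have -> : p1 s * p1 q = (p1 s - p1 p) * p1 t - (p1 s * p1 t - (p1 p * p1 t + p1 q * p1 s))
    by ring.
  by apply: ideal_sub => //; apply: ideal_mulr.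
have h5 : M (p1 q) by apply: (prime_res HMp h4); apply: inS.
have h6 : M (p2 t).
  have -> : p2 t = (p2 t - p2 q) + p2 q by rewrite subrK.
  by case: HMi => _ MD _; apply: MD => //; apply: Mp12.
by apply: (inS tS); apply: Mp21.
Qed.

Lemma nLP : locally_prufer D -> False.
Proof.
move=> HLP; have HP := HLP _ Hm.
set X' := locmap S X; set Y' := locmap S Y.
have XY' : X' * Y' = 0 by rewrite -rmorphM XY0 rmorph0.
have hreg : regular (X' + Y').
  rewrite -rmorphD XYd => q; have [x ->] := loc_elim q.
  rewrite /locmap piM => /pi_eq0P [u uS /= hu].
  apply/pi_eq0P; exists u => //; apply: (regK (@regular_diag _ a r hr)).
  by rewrite -hu mulrAC -mulrA.
have [d hd] := P5_split HP XY' hreg.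
have [x ex] := loc_elim d.
move: hd; rewrite ex -rmorphD XYd /X' /locmap piM => /pi_eqP [u uS /= hu].
have sS := valP x.
have h2 : M (p2 (val x).1).
  apply: (@resr (p2 u) r) ; [exact: inS2|exact: hr|].
  by have := congr1 p2 hu; rewrite !(rmorphM, rmorphB, rmorph0, rmorph1) /= p2X p2_diag; move=> <-; ring.
have h1 : M (p1 (val x).1 - p1 (val x).2).
  apply: (@resr (p1 u) r) ; [exact: inS|exact: hr|].
  by have := congr1 p1 hu; rewrite !(rmorphM, rmorphB, rmorph0, rmorph1) /= p1X p1_diag; move=> <-; ring.
apply: (inS sS).
have -> : p1 (val x).2 = p1 (val x).1 - (p1 (val x).1 - p1 (val x).2) by ring.
by apply: ideal_sub => //; apply: Mp21.
Qed.

End Contra.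

Lemma full_gen (A : comNzRingType) (a : ideal A) (r : A) (ar : a r) (hr : regular r) :
  (forall M (HM : is_maximal_ideal M), (forall x, a x -> M x) -> False) ->
  forall x, a x.
Proof.
move=> H; case: (pselect (a 1)) => [a1|na1]; first exact: ideal_all (ideal_is_ideal a) a1.
have [M [HM aM]] := exists_max_ideal (ideal_is_ideal a) na1.
by case: (H M HM aM).
Qed.


Section P5Retract.
Variables (R S : comNzRingType) (pi : {rmorphism R -> S}) (de : {rmorphism S -> R}).
Hypothesis pide : forall x, pi (de x) = x.
Hypothesis pireg : forall x, regular x -> regular (pi x).
Hypothesis dereg : forall x, regular x -> regular (de x).

Let Hpi : forall s, s \in regular_mulset R -> pi s \in regular_mulset S.
Proof. by move=> s /in_regular /pireg /regular_in. Qed.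
Local Notation E := (locF Hpi).
Local Notation iR := (locmap (regular_mulset R)).
Local Notation iS := (locmap (regular_mulset S)).

Lemma map_pide (s : seq S) : map pi (map de s) = s.
Proof. by rewrite -map_comp; apply: map_id_in => x _ /=; rewrite pide. Qed.

Lemma P5_retract : P5 R -> P5 S.
Proof.
move=> HP s [z Iz rz].
have hI' : regular_ideal (ideal_gen (map de s)).
  by exists (de z); [exact: ideal_gen_map|exact: dereg].
have [J' [J'0 J'D J'M [d rd hd]] HIJ] := HP _ hI'.
pose J := fun q => exists2 q', J' q' & q = E q'.
have EiS : forall r, E (iR (de r)) = iS r by move=> r; rewrite locF_locmap pide.
exists J.
  split.
  - by exists 0 => //; rewrite rmorph0.
  - by move=> _ _ [x Jx ->] [y Jy ->]; exists (x + y); [exact: J'D|rewrite rmorphD].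
  - move=> r _ [x Jx ->]; exists (iR (de r) * x); first exact: J'M.
    by rewrite rmorphM /= EiS.
  - exists (pi d); first exact: pireg.
    move=> _ [q Jq ->]; have [r' hr'] := hd q Jq.
    by exists (pi r'); rewrite -(locF_locmap Hpi) -rmorphM /= hr' locF_locmap.
move=> w; split.
- case=> n [f [g [Hf Hg ->]]].
  have hT0 : forall k, exists t, ideal_gen s t /\ f k = iS t.
    by move=> k; have [t ? ?] := Hf k; exists t.
  have [T hT] := choice hT0.
  have hG0 : forall k, exists t, J' t /\ g k = E t.
    by move=> k; have [t ? ?] := Hg k; exists t.
  have [G hG] := choice hG0.
  have : submod_mul (fun q => exists2 t, ideal_gen (map de s) t & q = iR t) J'
           (\sum_(k < n) iR (de (T k)) * G k).
    exists n, (fun k => iR (de (T k))), G; split => // k.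
    + by exists (de (T k)) => //; apply: ideal_gen_map; case: (hT k).
    + by case: (hG k).
  case/HIJ => r' e; exists (pi r'); rewrite -(locF_locmap Hpi) -e rmorph_sum.
  apply: eq_bigr => k _; rewrite rmorphM /= EiS.
  by case: (hT k) => _ <-; case: (hG k) => _ <-.
- case=> r ->.
  have [n [f [g [Hf Hg e]]]] := (HIJ (iR (de r))).2 (ex_intro _ (de r) erefl).
  exists n, (fun k => E (f k)), (fun k => E (g k)); split.
  + move=> k; have [t It ->] := Hf k; exists (pi t); last by rewrite locF_locmap.
    by rewrite -(map_pide s); apply: ideal_gen_map.
  + by move=> k; exists (g k).
  + by rewrite -EiS e rmorph_sum; apply: eq_bigr => k _; rewrite rmorphM.
Qed.
End P5Retract.

Lemma iso_reg (X Y : comNzRingType) (f : {rmorphism X -> Y}) (g : {rmorphism Y -> X}) :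
  (forall x, g (f x) = x) -> (forall y, f (g y) = y) ->
  forall x, regular x -> regular (f x).
Proof.
move=> gf fg x rx y e.
have h : g y = 0 by apply: rx; have := congr1 g e; rewrite rmorphM /= gf rmorph0.
by rewrite -[y]fg h rmorph0.
Qed.

Lemma VD_retract (X Y : comNzRingType) (f : {rmorphism X -> Y}) (g : {rmorphism Y -> X}) :
  (forall x, g (f x) = x) -> valuation_domain Y -> valuation_domain X.
Proof.
move=> gf [dom div]; split.
- move=> x y e; have : f x * f y = 0 by rewrite -rmorphM e rmorph0.
  by case/dom => h; [left|right]; rewrite -[LHS]gf h rmorph0.
- move=> x y; case: (div (f x) (f y)) => [[c e]|[c e]]; [left|right]; exists (g c).
  + by rewrite -[y]gf e rmorphM gf.
  + by rewrite -[x]gf e rmorphM gf.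
Qed.

Definition principal (R : comNzRingType) (I : R -> Prop) :=
  exists g, forall z, I z <-> exists c, z = c * g.

Lemma principal_retract (X Y : comNzRingType) (f : {rmorphism X -> Y})
    (g : {rmorphism Y -> X}) (t : seq X) :
  (forall x, g (f x) = x) ->
  principal (ideal_gen (map f t)) -> principal (ideal_gen t).
Proof.
move=> gf [g0 hg]; exists (g g0) => z; split.
- move/(ideal_gen_map f)/hg => [c e]; exists (g c).
  by rewrite -[z]gf e rmorphM.
- case=> c ->; case: (ideal_gen_ideal t) => _ _ IM; apply: IM.
  have : ideal_gen (map g (map f t)) (g g0).
    by apply: ideal_gen_map; apply/hg; exists 1; rewrite mul1r.
  by rewrite -map_comp (@map_id_in _ (g \o f)) // => x _ /=; rewrite gf.
Qed.


Lemma preim_prime (R S : comNzRingType) (f : {rmorphism R -> S}) (m : S -> Prop) :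
  is_prime_ideal m -> is_prime_ideal (fun x => m (f x)).
Proof.
case=> [[m0 mD mM] m1 mp]; split; [split| |].
- by rewrite rmorph0.
- by move=> x y hx hy; rewrite rmorphD; exact: mD.
- by move=> r x hx; rewrite rmorphM; exact: mM.
- by rewrite rmorph1.
- by move=> x y; rewrite rmorphM; exact: mp.
Qed.

Lemma preim_ideal (R S : comNzRingType) (f : {rmorphism R -> S}) (J : S -> Prop) :
  is_ideal J -> is_ideal (fun x => J (f x)).
Proof.
case=> J0 JD JM; split.
- by rewrite rmorph0.
- by move=> x y hx hy; rewrite rmorphD; exact: JD.
- by move=> r x hx; rewrite rmorphM; exact: JM.
Qed.

Section Full.
Variables (A : comNzRingType) (a : ideal A).
Hypothesis full : forall x, a x.
Local Notation D := (dup a).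
Local Notation p1 := (@p1 _ a).
Local Notation p2 := (@p2 _ a).
Local Notation diag := (@diag _ a).

Definition mk (x y : A) : D := mkD (full (y - x)).
Lemma p1_mk x y : p1 (mk x y) = x. Proof. by []. Qed.
Lemma p2_mk x y : p2 (mk x y) = y. Proof. by []. Qed.
Definition e1 := mk 1 0.
Definition e2 := mk 0 1.

Section Pb.
Variable b : bool.
Definition pb (z : D) : A := if b then p1 z else p2 z.
Lemma pb_zmod : zmod_morphism pb.
Proof. by move=> x y; rewrite /pb; case: b; rewrite rmorphB. Qed.
Lemma pb_mon : monoid_morphism pb.
Proof.
rewrite /pb; split; first by case: b; rewrite rmorph1.
by move=> x y; case: b; rewrite rmorphM.
Qed.
HB.instance Definition _ := GRing.isZmodMorphism.Build _ _ pb pb_zmod.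
HB.instance Definition _ := GRing.isMonoidMorphism.Build _ _ pb pb_mon.
Lemma pb_diag x : pb (diag x) = x. Proof. by rewrite /pb; case: b. Qed.
Definition eb : D := if b then e1 else e2.
Lemma pb_eb : pb eb = 1. Proof. by rewrite /pb /eb; case: b. Qed.
Lemma eb_kill (z : D) : pb z = 0 -> eb * z = 0.
Proof.
rewrite /pb /eb; case: b => h; apply: D_eq; rewrite rmorphM rmorph0 /=;
  by rewrite ?h ?mul1r ?mul0r ?p1_mk ?p2_mk ?h.
Qed.
Lemma fb_fix (z : D) : pb z = 0 -> (if b then e2 else e1) * z = z.
Proof.
rewrite /pb; case: b => h; apply: D_eq; rewrite rmorphM /=;
  by rewrite ?h ?mul1r ?mul0r ?p1_mk ?p2_mk ?h.
Qed.
End Pb.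

Lemma split_gen b (m : D -> Prop) : is_ideal m -> m (if b then e2 else e1) ->
  forall z, m z <-> m (diag (pb b z)).
Proof.
move=> mI hf z; case: (mI) => m0 mD mM.
have hw : m (z - diag (pb b z)).
  have hz : pb b (z - diag (pb b z)) = 0 by rewrite rmorphB /= pb_diag subrr.
  by have := mM (z - diag (pb b z)) _ hf; rewrite mulrC (fb_fix hz).
split => h.
- have -> : diag (pb b z) = z + (-1) * (z - diag (pb b z)) by ring.
  by apply: mD => //; apply: mM.
- have -> : z = diag (pb b z) + (z - diag (pb b z)) by ring.
  by apply: mD.
Qed.

Lemma split_prime (m : D -> Prop) : is_prime_ideal m ->
  exists b, forall z, m z <-> m (diag (pb b z)).
Proof.
case=> mI m1 mp.
have e12 : e1 * e2 = 0 by apply: D_eq; rewrite rmorphM rmorph0 /= ?mulr0 ?mul0r.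
have : m (e1 * e2) by rewrite e12; case: mI.
by case/mp => he; [exists false|exists true]; apply: split_gen.
Qed.

Lemma contr_max b (m : D -> Prop) : is_maximal_ideal m ->
  (forall z, m z <-> m (diag (pb b z))) -> is_maximal_ideal (fun x => m (diag x)).
Proof.
move=> Hm hb; have [Hmi m1 mmax] := Hm.
have [HPi P1 _] := preim_prime diag (maximal_prime Hm).
split => // J HJ PJ.
pose J' := fun z => J (pb b z).
have HJ' : is_ideal J' by apply: (preim_ideal (pb b)).
have mJ' : forall z, m z -> J' z by move=> z /hb /PJ.
case: (mmax J' HJ' mJ') => [J'm|J'1]; [left|right].
- by move=> x Jx; apply: J'm; rewrite /J' pb_diag.
- by move: J'1; rewrite /J' rmorph1.
Qed.

Section Iso.
Variables (b : bool) (m : D -> Prop) (Hm : is_prime_ideal m).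
Variables (P : A -> Prop) (HP : is_prime_ideal P).
Hypothesis hmP : forall z, m z <-> P (pb b z).

Lemma Hf1 : forall s, s \in prime_mulset Hm -> pb b s \in prime_mulset HP.
Proof. by move=> s /in_prime_mulset h; apply/in_prime_mulset => /hmP. Qed.
Lemma Hf2 : forall t, t \in prime_mulset HP -> diag t \in prime_mulset Hm.
Proof.
by move=> t /in_prime_mulset h; apply/in_prime_mulset => /hmP; rewrite pb_diag.
Qed.

Definition Phi := locF Hf1.
Definition Psi := locF Hf2.

Lemma PhiPsi q : Phi (Psi q) = q.
Proof.
have [x ->] := loc_elim q; rewrite /Phi /Psi !locF_pi.
by apply: pi_eq => /=; rewrite !pb_diag.
Qed.

Lemma PsiPhi q : Psi (Phi q) = q.
Proof.
have [x ->] := loc_elim q; rewrite /Phi /Psi !locF_pi.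
apply/pi_eqP; exists (eb b).
  by apply/in_prime_mulset => /hmP; rewrite pb_eb; case: HP.
apply: eb_kill => /=; rewrite !(rmorphB, rmorphM) /= !pb_diag; ring.
Qed.

Lemma Phi_locmap z : Phi (locmap _ z) = locmap _ (pb b z).
Proof. exact: locF_locmap. Qed.
Lemma Psi_locmap x : Psi (locmap _ x) = locmap _ (diag x).
Proof. exact: locF_locmap. Qed.
End Iso.

Lemma P2_AD : P2 A -> P2 D.
Proof.
move=> HA m Hm; have [b hb] := split_prime Hm.
have HP := preim_prime diag Hm.
exact: (VD_retract (f := @Phi b m Hm _ HP hb) (g := @Psi b m Hm _ HP hb)
          (@PsiPhi b m Hm _ HP hb) (HA _ HP)).
Qed.

Lemma P2_DA : P2 D -> P2 A.
Proof.
move=> HD P HP; have Hm := hat_prime a HP.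
have hb : forall z, hat P z <-> P (pb true z) by [].
exact: (VD_retract (f := @Psi true _ Hm P HP hb) (g := @Phi true _ Hm P HP hb)
          (@PhiPsi true _ Hm P HP hb) (HD _ Hm)).
Qed.
Lemma P3_AD : P3 A -> P3 D.
Proof.
move=> HA s m Hm.
have [b hb] := split_prime (maximal_prime Hm).
have HPm := contr_max Hm hb.
have hA := HA (map (pb b) s) _ HPm.
apply: (principal_retract (f := @Phi b m (maximal_prime Hm) _ (maximal_prime HPm) hb)
  (g := @Psi b m (maximal_prime Hm) _ (maximal_prime HPm) hb)
  (@PsiPhi b m (maximal_prime Hm) _ (maximal_prime HPm) hb)).
have -> : map (@Phi b m (maximal_prime Hm) _ (maximal_prime HPm) hb)
   (map (locmap (max_mulset Hm)) s) = map (locmap (max_mulset HPm)) (map (pb b) s).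
  by rewrite -!map_comp; apply: eq_map => z /=; rewrite Phi_locmap.
exact: hA.
Qed.

Lemma P3_DA : P3 D -> P3 A.
Proof.
move=> HD s M HM.
have Hm := hat_max a HM.
have hb : forall z, hat M z <-> M (pb true z) by [].
have hD := HD (map diag s) _ Hm.
apply: (principal_retract (f := @Psi true _ (maximal_prime Hm) M (maximal_prime HM) hb)
  (g := @Phi true _ (maximal_prime Hm) M (maximal_prime HM) hb)
  (@PhiPsi true _ (maximal_prime Hm) M (maximal_prime HM) hb)).
have -> : map (@Psi true _ (maximal_prime Hm) M (maximal_prime HM) hb)
   (map (locmap (max_mulset HM)) s) = map (locmap (max_mulset Hm)) (map diag s).
  by rewrite -!map_comp; apply: eq_map => z /=; rewrite Psi_locmap.
exact: hD.
Qed.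

Lemma LP_AD : locally_prufer A -> locally_prufer D.
Proof.
move=> HA m Hm; have [b hb] := split_prime (maximal_prime Hm).
have HPm := contr_max Hm hb.
pose Ph := @Phi b m (maximal_prime Hm) _ (maximal_prime HPm) hb.
pose Ps := @Psi b m (maximal_prime Hm) _ (maximal_prime HPm) hb.
have e1 : forall x, Ps (Ph x) = x by apply: PsiPhi.
have e2 : forall x, Ph (Ps x) = x by apply: PhiPsi.
exact: (@P5_retract _ _ Ps Ph e1 (iso_reg e2 e1) (iso_reg e1 e2) (HA _ HPm)).
Qed.

Lemma LP_DA : locally_prufer D -> locally_prufer A.
Proof.
move=> HD M HM; have Hm := hat_max a HM.
have hb : forall z, hat M z <-> M (pb true z) by [].
pose Ph := @Phi true _ (maximal_prime Hm) M (maximal_prime HM) hb.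
pose Ps := @Psi true _ (maximal_prime Hm) M (maximal_prime HM) hb.
have e1 : forall x, Ps (Ph x) = x by apply: PsiPhi.
have e2 : forall x, Ph (Ps x) = x by apply: PhiPsi.
exact: (@P5_retract _ _ Ph Ps e2 (iso_reg e1 e2) (iso_reg e2 e1) (HD _ Hm)).
Qed.

End Full.


Section PolyIdeal.
Variable R : comNzRingType.

Lemma content_coef (p : {poly R}) i : content p p`_i.
Proof.
case: (ltnP i (size p)) => h; first exact: ideal_gen_nth.
by rewrite nth_default //; case: (ideal_gen_ideal (polyseq p)).
Qed.

Lemma content_sum (p : {poly R}) n (c : nat -> R) :
  content p (\sum_(i < n) c i * p`_i).
Proof.
apply: (ideal_sum (F := fun i => c i * p`_i)) => [|i _]; first exact: ideal_gen_ideal.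
by case: (ideal_gen_ideal (polyseq p)) => _ _ IM; apply: IM; apply: content_coef.
Qed.

Lemma mulgen_coef (g h : {poly R}) j k : ideal_gen_mul g h (g`_j * h`_k).
Proof.
case: (ltnP j (size g)) => hj; last first.
  by rewrite (nth_default 0 hj) mul0r; case: (ideal_gen_ideal [seq x * y | x <- (g : seq R), y <- (h : seq R)]).
case: (ltnP k (size h)) => hk; last first.
  by rewrite (nth_default 0 hk) mulr0; case: (ideal_gen_ideal [seq x * y | x <- (g : seq R), y <- (h : seq R)]).
have hin : g`_j * h`_k \in [seq x * y | x <- (g : seq R), y <- (h : seq R)].
  by apply: allpairs_f; apply: mem_nth.
rewrite /ideal_gen_mul -(nth_index 0 hin); apply: ideal_gen_nth.
by rewrite index_mem.
Qed.

Lemma content_mul_sub (g h : {poly R}) z : content (g * h) z -> ideal_gen_mul g h z.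
Proof.
apply: ideal_gen_min; first exact: ideal_gen_ideal.
move=> i _; rewrite coefM.
apply: (ideal_sum (F := fun j => g`_j * h`_(i - j))) => [|j _]; first exact: ideal_gen_ideal.
exact: mulgen_coef.
Qed.

Lemma mul_sub_content (g h : {poly R}) :
  (forall j k, content (g * h) (g`_j * h`_k)) ->
  forall z, ideal_gen_mul g h z -> content (g * h) z.
Proof.
move=> H; apply: ideal_gen_min; first exact: ideal_gen_ideal.
move=> i hi; have /allpairsP [[x y] [/= xg yh ->]] := mem_nth 0 hi.
by rewrite -(nth_index 0 xg) -(nth_index 0 yh).
Qed.
End PolyIdeal.

Section FullP4.
Variables (A : comNzRingType) (a : ideal A).
Hypothesis full : forall x, a x.
Local Notation D := (dup a).
Local Notation p1 := (@p1 _ a).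
Local Notation p2 := (@p2 _ a).
Local Notation diag := (@diag _ a).
Local Notation mk := (mk full).

Lemma P4_AD : P4 A -> P4 D.
Proof.
move=> HA g h z; split; first exact: content_mul_sub.
apply: mul_sub_content => j k.
set w := g`_j * h`_k.
have c1 : content (map_poly p1 g * map_poly p1 h) (p1 w).
  by apply/HA; rewrite /w rmorphM -!coef_map; apply: mulgen_coef.
have c2 : content (map_poly p2 g * map_poly p2 h) (p2 w).
  by apply/HA; rewrite /w rmorphM -!coef_map; apply: mulgen_coef.
case: c1 => f1; rewrite -rmorphM => hf1.
case: c2 => f2; rewrite -rmorphM => hf2.
have -> : w = \sum_(i < size (map_poly p1 (g * h))) mk (f1 i) 0 * (g * h)`_i +
              \sum_(i < size (map_poly p2 (g * h))) mk 0 (f2 i) * (g * h)`_i.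
  apply: D_eq.
  - rewrite hf1 rmorphD !rmorph_sum /= -[LHS]addr0; congr (_ + _).
      by apply: eq_bigr => i _; rewrite coef_map [RHS]rmorphM.
    by rewrite big1 // => i _; rewrite [LHS]rmorphM /= p1_mk mul0r.
  - rewrite hf2 rmorphD !rmorph_sum /= -[LHS]add0r; congr (_ + _).
      by rewrite big1 // => i _; rewrite [LHS]rmorphM /= p2_mk mul0r.
    by apply: eq_bigr => i _; rewrite coef_map [RHS]rmorphM.
case: (ideal_gen_ideal (polyseq (g * h))) => _ CD _; apply: CD.
  exact: (content_sum _ _ (fun i => mk (f1 i) 0)).
exact: (content_sum _ _ (fun i => mk 0 (f2 i))).
Qed.

Lemma P4_DA : P4 D -> P4 A.
Proof.
move=> HD g h z; split; first exact: content_mul_sub.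
apply: mul_sub_content => j k.
have : content (map_poly diag g * map_poly diag h) (diag (g`_j * h`_k)).
  by apply/HD; rewrite rmorphM -!coef_map; apply: mulgen_coef.
case=> f; rewrite -rmorphM => /(congr1 p1); rewrite /= p1_diag => ->.
rewrite rmorph_sum /=.
rewrite (eq_bigr (fun i : 'I_(size (map_poly diag (g * h))) => p1 (f i) * (g * h)`_i)).
  exact: (content_sum _ _ (fun i => p1 (f i))).
by move=> i _; rewrite coef_map [LHS]rmorphM /= p1_diag.
Qed.
End FullP4.


Section FullP5.
Variables (A : comNzRingType) (a : ideal A).
Hypothesis full : forall x, a x.
Local Notation D := (dup a).
Local Notation p1 := (@p1 _ a).
Local Notation p2 := (@p2 _ a).
Local Notation diag := (@diag _ a).
Local Notation mk := (mk full).
Local Notation pb := (@pb _ a).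
Local Notation eb := (eb full).
Local Notation iD := (locmap (regular_mulset D)).
Local Notation iA := (locmap (regular_mulset A)).

Lemma mk_reg x y : regular x -> regular y -> regular (mk x y).
Proof.
move=> hx hy z e; apply: D_eq; rewrite rmorph0.
  by apply: hx; have := congr1 p1 e; rewrite rmorphM rmorph0.
by apply: hy; have := congr1 p2 e; rewrite rmorphM rmorph0.
Qed.

Lemma pb_reg b (z : D) : regular z -> regular (pb b z).
Proof.
rewrite /pb; case: b => hz y e.
- have h : z * mk y 0 = 0.
    by apply: D_eq; rewrite rmorphM rmorph0 /= ?p1_mk ?p2_mk ?mulr0.
  by have := congr1 p1 (hz _ h); rewrite rmorph0.
- have h : z * mk 0 y = 0.
    by apply: D_eq; rewrite rmorphM rmorph0 /= ?p1_mk ?p2_mk ?mulr0.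
  by have := congr1 p2 (hz _ h); rewrite rmorph0.
Qed.

Lemma P5_DA : P5 D -> P5 A.
Proof.
have h1 : forall x : D, regular x -> regular (p1 x) by move=> x /(@pb_reg true x).
have h2 : forall x : A, regular x -> regular (diag x) by move=> x /regular_diag.
have h3 : forall x : A, p1 (diag x) = x by [].
exact: (P5_retract h3 h1 h2).
Qed.

Let Hpb b : forall s, s \in regular_mulset D -> pb b s \in regular_mulset A.
Proof. by move=> s /in_regular /(@pb_reg b s) /regular_in. Qed.
Let Hd : forall s, s \in regular_mulset A -> diag s \in regular_mulset D.
Proof. by move=> s /in_regular /(@regular_diag _ a s) /regular_in. Qed.
Local Notation E b := (locF (Hpb b)).
Local Notation Ld := (locF Hd).

Lemma E_iota b z : E b (iD z) = iA (pb b z).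
Proof. exact: locF_locmap. Qed.
Lemma Ld_iota x : Ld (iA x) = iD (diag x).
Proof. exact: locF_locmap. Qed.
Lemma ELd b q : E b (Ld q) = q.
Proof.
have [x ->] := loc_elim q; rewrite !locF_pi; apply: pi_eq => /=.
by rewrite !pb_diag.
Qed.
Lemma ELde b c q : E c (Ld q * iD (eb b)) = q * iA (pb c (eb b)).
Proof. by rewrite rmorphM /= ELd E_iota. Qed.

Lemma Einj q q' : E true q = E true q' -> E false q = E false q' -> q = q'.
Proof.
move=> h1 h2; apply/eqP; rewrite -subr_eq0; apply/eqP.
have : E true (q - q') = 0 by rewrite rmorphB /= h1 subrr.
have : E false (q - q') = 0 by rewrite rmorphB /= h2 subrr.
have [x ->] := loc_elim (q - q'); rewrite !locF_pi => /pi_eq0P [v vS hv] /pi_eq0P [u uS hu].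
apply/pi_eq0P; exists 1; first exact: ms1.
rewrite mul1r; apply: D_eq; rewrite rmorph0.
  by apply: (in_regular uS); exact: hu.
by apply: (in_regular vS); exact: hv.
Qed.

Lemma diag_eb b (z : D) : diag (pb b z) * eb b = eb b * z.
Proof.
rewrite /pb /eb; case: b; apply: D_eq; rewrite !rmorphM /= ?p1_mk ?p2_mk;
  by rewrite ?mulr1 ?mul1r ?mulr0 ?mul0r.
Qed.

Lemma Ilift b (s : seq D) t : ideal_gen (map (pb b) s) t -> ideal_gen s (diag t * eb b).
Proof.
have [I0 ID IM] := ideal_gen_ideal s.
move: t; apply: (@ideal_gen_min _ (map (pb b) s) (fun t => ideal_gen s (diag t * eb b))).
  split.
  - by rewrite rmorph0 mul0r.
  - by move=> x y hx hy; rewrite rmorphD mulrDl; apply: ID.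
  - by move=> r x hx; rewrite rmorphM -mulrA; apply: IM.
move=> i; rewrite size_map => hi; rewrite (nth_map 0) // diag_eb.
by apply: IM; apply: ideal_gen_nth.
Qed.

Lemma P5_AD : P5 A -> P5 D.
Proof.
move=> HA s [z Iz rz].
have hI b : regular_ideal (ideal_gen (map (pb b) s)).
  by exists (pb b z); [apply: ideal_gen_map|apply: pb_reg].
have [J1 [J10 J1D J1M [d1 rd1 hd1]] HIJ1] := HA _ (hI true).
have [J2 [J20 J2D J2M [d2 rd2 hd2]] HIJ2] := HA _ (hI false).
pose J := fun q => J1 (E true q) /\ J2 (E false q).
exists J.
  split.
  - by rewrite /J !rmorph0.
  - move=> x y [hx1 hx2] [hy1 hy2]; rewrite /J !rmorphD.
    by split; [exact: J1D|exact: J2D].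
  - move=> r x [hx1 hx2]; rewrite /J !rmorphM /= !E_iota.
    by split; [exact: J1M|exact: J2M].
  - exists (mk d1 d2); first exact: mk_reg.
    move=> q [hq1 hq2]; have [r1 e1] := hd1 _ hq1; have [r2 e2] := hd2 _ hq2.
    exists (mk r1 r2); apply: Einj; rewrite rmorphM /= !E_iota /=.
      exact: e1.
    exact: e2.
move=> w; split.
- case=> n [f [g [Hf Hg ->]]].
  have key : forall b (J0 : total_quot A -> Prop),
      (forall k, J0 (E b (g k))) ->
      (forall z, submod_mul (fun q => exists2 x, ideal_gen (map (pb b) s) x & q = iA x) J0 z
                 <-> exists r, z = iA r) ->
      exists r, E b (\sum_(k < n) f k * g k) = iA r.
    move=> b J0 HJ0 HIJ0; apply/HIJ0.
    exists n, (fun k => E b (f k)), (fun k => E b (g k)); split => //.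
    + move=> k; have [t It ->] := Hf k; exists (pb b t); first exact: ideal_gen_map.
      exact: E_iota.
    + by rewrite rmorph_sum; apply: eq_bigr => k _; rewrite rmorphM.
  have [r1 e1] := key true J1 (fun k => proj1 (Hg k)) HIJ1.
  have [r2 e2] := key false J2 (fun k => proj2 (Hg k)) HIJ2.
  exists (mk r1 r2); apply: Einj; rewrite E_iota /=.
    exact: e1.
  exact: e2.
- case=> r ->.
  have [n1 [F1 [G1 [HF1 HG1 e1]]]] := (HIJ1 (iA (pb true r))).2 (ex_intro _ (pb true r) erefl).
  have [n2 [F2 [G2 [HF2 HG2 e2]]]] := (HIJ2 (iA (pb false r))).2 (ex_intro _ (pb false r) erefl).
  pose f k := if (k < n1)%N then Ld (F1 k) * iD (eb true) else Ld (F2 (k - n1)%N) * iD (eb false).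
  pose g k := if (k < n1)%N then Ld (G1 k) * iD (eb true) else Ld (G2 (k - n1)%N) * iD (eb false).
  exists (n1 + n2)%N, f, g; split.
  + move=> k; rewrite /f; case: ifP => _.
      have [t It ->] := HF1 k; exists (diag t * eb true); first exact: Ilift.
      by rewrite Ld_iota rmorphM.
    have [t It ->] := HF2 (k - n1)%N; exists (diag t * eb false); first exact: Ilift.
    by rewrite Ld_iota rmorphM.
  + move=> k; rewrite /g /J; case: ifP => _; rewrite !ELde /= ?p1_mk ?p2_mk.
      by rewrite rmorph1 rmorph0 mulr1 mulr0; split; [exact: HG1|].
    by rewrite rmorph1 rmorph0 mulr1 mulr0; split; [|exact: HG2].
  + have ee b : iD (eb b) * iD (eb b) = iD (eb b).
      have eeb : eb b * eb b = eb b.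
        by apply: D_eq; rewrite rmorphM /eb; case: b; rewrite /= ?p1_mk ?p2_mk ?mulr1 ?mulr0.
      by rewrite -(rmorphM (locmap (regular_mulset D))) eeb.
    rewrite big_split_ord /=.
    have S1 : \sum_(k < n1) f (lshift n2 k) * g (lshift n2 k) = Ld (iA (pb true r)) * iD (eb true).
      rewrite e1 rmorph_sum mulr_suml; apply: eq_bigr => k _.
      rewrite /f /g /= ltn_ord rmorphM.
      by rewrite mulrACA; have := ee true; rewrite /= => ->.
    have S2 : \sum_(k < n2) f (rshift n1 k) * g (rshift n1 k) = Ld (iA (pb false r)) * iD (eb false).
      rewrite e2 rmorph_sum mulr_suml; apply: eq_bigr => k _.
      rewrite /f /g /= ltnNge leq_addr /= addKn rmorphM.
      by rewrite mulrACA; have := ee false; rewrite /= => ->.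
    rewrite S1 S2 !Ld_iota -!rmorphM -rmorphD; congr iD.
    by rewrite !diag_eb -mulrDl; apply: D_eq; rewrite /eb !rmorphM !rmorphD /= ?p1_mk ?p2_mk;
      rewrite ?addr0 ?add0r ?mul1r.
Qed.
End FullP5.


Definition resmod (R S : comNzRingType) (f : {rmorphism S -> R}) (M : lmodType R) : Type := M.

Section Restrict.
Variables (R S : comNzRingType) (phi : {rmorphism S -> R}) (M : lmodType R).
Local Notation RM := (resmod phi M).
HB.instance Definition _ := GRing.Zmodule.on RM.
Definition resscale (s : S) (m : RM) : RM := (phi s *: (m : M)).
Lemma res_scalerA x y (v : RM) : resscale x (resscale y v) = resscale (x * y) v.
Proof. by rewrite /resscale scalerA rmorphM. Qed.
Lemma res_scale1 : left_id 1 resscale.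
Proof. by move=> v; rewrite /resscale rmorph1 scale1r. Qed.
Lemma res_scalerDr : right_distributive resscale +%R.
Proof. by move=> x u v; rewrite /resscale scalerDr. Qed.
Lemma res_scalerDl (v : RM) : {morph resscale^~ v : x y / x + y}.
Proof. by move=> x y; rewrite /resscale rmorphD scalerDl. Qed.
HB.instance Definition _ := GRing.Zmodule_isLmodule.Build S RM
  res_scalerA res_scale1 res_scalerDr res_scalerDl.

End Restrict.

Section RestrictLin.
Variables (R S : comNzRingType) (phi : {rmorphism S -> R}) (M N : lmodType R).
Variable (g : {linear M -> N}).
Local Notation RM := (resmod phi M).
Definition resfun (m : RM) : resmod phi N := g m.
Lemma resfun_lin : linear resfun.
Proof. by move=> x u v; rewrite /resfun; exact: (linearP g (phi x) u v). Qed.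
HB.instance Definition _ := GRing.isLinear.Build S (resmod phi M) (resmod phi N) *:%R resfun resfun_lin.
Definition resfunL : {linear resmod phi M -> resmod phi N} :=
  GRing.Linear.clone S (resmod phi M) (resmod phi N) *:%R resfun _.
Lemma resfunLE m : resfunL m = g m. Proof. by []. Qed.
End RestrictLin.

Section FullP1.
Variables (A : comNzRingType) (a : ideal A).
Hypothesis full : forall x, a x.
Local Notation D := (dup a).
Local Notation p1 := (@p1 _ a).
Local Notation diag := (@diag _ a).
Local Notation pb := (@pb _ a).
Local Notation eb := (eb full).

Lemma P1_DA : P1 D -> P1 A.
Proof.
move=> HD s M N g gsurj h [hD hZ].
have I'I : forall z, ideal_gen (map diag s) z -> ideal_gen s (p1 z).
  move=> z /(ideal_gen_map p1); rewrite -map_comp (@map_id_in _ (p1 \o diag)) //.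
pose h' := fun z : D => (h (p1 z) : resmod p1 N).
have hlin : @linear_on D (resmod p1 N) (ideal_gen (map diag s)) h'.
  split.
  - by move=> z w Iz Iw; rewrite /h' rmorphD; apply: hD; apply: I'I.
  - by move=> r z Iz; rewrite /h' rmorphM; apply: hZ; apply: I'I.
have gs : forall n : resmod p1 N, exists m : resmod p1 M, (@resfunL _ _ p1 _ _ g) m = n.
  exact: gsurj.
have [k' [[kD kZ] gk]] := HD (map diag s) _ _ ((@resfunL _ _ p1 _ _ g)) gs h' hlin.
exists (fun x => (k' (diag x) : M)); split; [split|].
- by move=> x y Ix Iy; rewrite rmorphD; apply: kD; apply: ideal_gen_map.
- by move=> r x Ix; rewrite rmorphM kZ //; apply: ideal_gen_map.
- move=> x Ix; have := gk _ (ideal_gen_map diag Ix).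
  by rewrite /h' /= p1_diag.
Qed.

Lemma eb_idem b : eb b * eb b = eb b.
Proof.
by apply: D_eq; rewrite rmorphM /eb; case: b; rewrite /= ?p1_mk ?p2_mk ?mulr1 ?mulr0.
Qed.
Lemma eb_sum : eb true + eb false = 1.
Proof. by apply: D_eq; rewrite rmorphD rmorph1 /= ?p1_mk ?p2_mk ?addr0 ?add0r. Qed.

Lemma P1_AD : P1 A -> P1 D.
Proof.
move=> HA s M N g gsurj h [hD hZ].
have key : forall b, exists k : A -> M,
   [/\ forall x y, ideal_gen (map (pb b) s) x -> ideal_gen (map (pb b) s) y ->
         k (x + y) = k x + k y,
       forall r x, ideal_gen (map (pb b) s) x -> k (r * x) = diag r *: k x &
       forall x, ideal_gen (map (pb b) s) x -> g (k x) = h (diag x * eb b)].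
  move=> b.
  pose h1 := fun x : A => (h (diag x * eb b) : resmod diag N).
  have hl : @linear_on A (resmod diag N) (ideal_gen (map (pb b) s)) h1.
    split.
    - by move=> x y Ix Iy; rewrite /h1 rmorphD mulrDl; apply: hD; apply: Ilift.
    - by move=> r x Ix; rewrite /h1 rmorphM -mulrA; apply: hZ; apply: Ilift.
  have gs : forall n : resmod diag N, exists m : resmod diag M, (@resfunL _ _ diag _ _ g) m = n.
    exact: gsurj.
  have [k [[kD kZ] gk]] := HA (map (pb b) s) _ _ ((@resfunL _ _ diag _ _ g)) gs h1 hl.
  by exists (fun x => (k x : M)); split.
have [k1 [k1D k1Z gk1]] := key true.
have [k2 [k2D k2Z gk2]] := key false.
have Ib b z : ideal_gen s z -> ideal_gen (map (pb b) s) (pb b z).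
  exact: ideal_gen_map.
exists (fun z => eb true *: k1 (pb true z) + eb false *: k2 (pb false z)); split; [split|].
- move=> z w Iz Iw; rewrite !rmorphD k1D ?k2D; try exact: Ib.
  by rewrite !scalerDr addrACA.
- move=> r z Iz; rewrite !rmorphM k1Z ?k2Z; try exact: Ib.
  rewrite !scalerA scalerDr !scalerA.
  rewrite (mulrC (eb true)) (mulrC (eb false)) (@diag_eb _ _ full true r) (@diag_eb _ _ full false r).
  by rewrite (mulrC r) (mulrC r).
- move=> z Iz; rewrite linearD !linearZ /= gk1 ?gk2; try exact: Ib.
  rewrite (@diag_eb _ _ full true z) (@diag_eb _ _ full false z) !hZ //.
  by rewrite !scalerA (eb_idem true) (eb_idem false) -scalerDl eb_sum scale1r.
Qed.
End FullP1.


Theorem corollary3p3 (A : comNzRingType) (a : ideal A) :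
  regular_ideal a ->
  (forall n : nat, (1 <= n <= 5)%N ->
     (Pcond n (dup a) <-> Pcond n A /\ (forall x : A, a x))) /\
  (locally_prufer (dup a) <-> locally_prufer A /\ (forall x : A, a x)).
Proof.
case=> r ar hr.
have fP2 : P2 (dup a) -> forall x, a x.
  by move=> H; apply: (full_gen ar hr) => M HM aM; exact: (nP2 ar hr HM aM H).
have fP3 : P3 (dup a) -> forall x, a x.
  by move=> H; apply: (full_gen ar hr) => M HM aM; exact: (nP3 ar hr HM aM H).
have fLP : locally_prufer (dup a) -> forall x, a x.
  by move=> H; apply: (full_gen ar hr) => M HM aM; exact: (nLP ar hr HM aM H).
split.
- case=> [|[|[|[|[|[|n]]]]]] //= _.
  + split; [move=> H; have f := full_P1 ar hr H; split => //; exact: P1_DA H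
           |case=> H f; exact: P1_AD f H].
  + split; [move=> H; have f := fP2 H; split => //; exact: P2_DA H
           |case=> H f; exact: P2_AD f H].
  + split; [move=> H; have f := fP3 H; split => //; exact: P3_DA H
           |case=> H f; exact: P3_AD f H].
  + split; [move=> H; have f := full_P4 ar hr H; split => //; exact: P4_DA H
           |case=> H f; exact: P4_AD f H].
  + split; [move=> H; have f := full_P5 ar hr H; split => //; exact: P5_DA f H
           |case=> H f; exact: P5_AD f H].
- split; [move=> H; have f := fLP H; split => //; exact: LP_DA f H
         |case=> H f; exact: LP_AD f H].
Qed.
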